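(* Let $0\le\alpha<\alpha_{space}:=\min(v_0/4,\gamma/(2V^0))$, let $u_0\in C_\alpha$ and let $(s,u)$ be the solution of the free-interface problem with initial data $u_0$. Then for all $t>0$, $$|T_1(t)u_0|_\alpha\le V^0/\sqrt\gamma .$$
   Context: Fix $\gamma>0$, $0<v_0\le V^0$. The kinetics $g:[0,\infty)\to\mathbb{R}$ is monotonically decreasing, differentiable, $|g'|\le C$, $-V^0\le g\le -v_0$. Free-interface problem: find $s(t)$, $s(0)=0$, and $u(x,t)$ with $u_t=u_{xx}-\gamma u$ for $x\ne s(t)$, $t>0$; $u(x,0)=u_0(x)$; $g(u(s(t),t))=v(t)$; $u_x^+(s(t),t)-u_x^-(s(t),t)=v(t)$, with $v=s'$, $u_x^\pm$ one-sided derivatives, $u\to0$ at $\pm\infty$; the classical solution exists and is unique, and $-V^0\le v(t)\le -v_0$. With $G(x,t,\xi,\tau)=[4\pi(t-\tau)]^{-1/2}\exp\{-(x-\xi)^2/(4(t-\tau))\}$, define $(T_1(t)u_0)(x)=-\int_0^t e^{-\gamma(t-\tau)}G(x,t,s(\tau),\tau)v(\tau)d\tau$ (the free-interface contribution to $u$). Weighted norms: $|f|_\alpha=\sup_x e^{\alpha|x|}|f(x)|$, $C_\alpha=\{f\in C(\mathbb{R}):|f|_\alpha<\infty\}$; for a function $f(\cdot,t)$ associated with the solution at time $t$, $|f(\cdot,t)|_\alpha:=\sup_x e^{\alpha|x-s(t)|}|f(x,t)|$. *)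

(* Defs.v *)
From HB Require Import structures.
From mathcomp Require Import all_boot all_order all_algebra.
From mathcomp Require Import all_classical all_reals all_analysis.
Set Implicit Arguments. Unset Strict Implicit. Unset Printing Implicit Defensive.
Import Order.TTheory GRing.Theory Num.Theory.
Import numFieldNormedType.Exports.
Local Open Scope classical_set_scope.
Local Open Scope ring_scope.

Section FreeInterface.
Variable R : realType.

Definition heatG (x t xi tau : R) : R :=
  (Num.sqrt (4 * pi * (t - tau)))^-1 * expR (- ((x - xi) ^+ 2) / (4 * (t - tau))).

Definition time_interval (t : R) : set R := `[0, t]%classic.

(* (T_1(t) u_0)(x) = - int_0^t e^{-gamma (t - tau)} G(x,t,s(tau),tau) v(tau) dtau,
   as a Lebesgue integral (extended-real valued). *)
Definition T1 (gamma : R) (s v : R -> R) (x t : R) : \bar R :=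
  (\int[lebesgue_measure]_(tau in time_interval t)
     (- (expR (- gamma * (t - tau)) * heatG x t (s tau) tau * v tau))%:E)%E.

Definition in_C_alpha (alpha : R) (f : R -> R) : Prop :=
  continuous f /\ exists M : R, forall x, expR (alpha * `|x|) * `|f x| <= M.

Definition kinetics (v0 V0 C : R) (g : R -> R) : Prop :=
  (forall x y, 0 <= x -> x <= y -> g y <= g x) /\
  (forall x, 0 < x -> derivable g x 1) /\
  (forall x, 0 < x -> `|derive1 g x| <= C) /\
  (forall x, 0 <= x -> - V0 <= g x <= - v0).

Definition has_right_dx (u : R -> R -> R) (a t l : R) : Prop :=
  (fun h => (u (a + h) t - u a t) / h) @ 0^'+ --> l.
Definition has_left_dx (u : R -> R -> R) (a t l : R) : Prop :=
  (fun h => (u (a + h) t - u a t) / h) @ 0^'- --> l.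

Definition free_interface_solution (gamma : R) (g u0 : R -> R)
    (s v : R -> R) (u : R -> R -> R) : Prop :=
  s 0 = 0 /\
  {within [set t | 0 <= t], continuous s} /\
  (forall t, 0 < t -> derivable s t 1 /\ derive1 s t = v t) /\
  {within [set p : R * R | 0 <= p.2], continuous (fun p : R * R => u p.1 p.2)} /\
  (forall x, u x 0 = u0 x) /\
  (forall t x, 0 < t -> x != s t ->
     derivable (fun tau => u x tau) t 1 /\
     derivable (fun y => u y t) x 1 /\
     derivable (derive1 (fun z => u z t)) x 1 /\
     derive1 (fun tau => u x tau) t
       = derive1 (derive1 (fun z => u z t)) x - gamma * u x t) /\
  (forall t, 0 < t -> g (u (s t) t) = v t) /\
  (forall t, 0 < t -> exists lp lm,
     has_right_dx u (s t) t lp /\ has_left_dx u (s t) t lm /\ lp - lm = v t) /\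
  (forall t, 0 < t ->
     (fun x => u x t) @ +oo --> 0 /\ (fun x => u x t) @ -oo --> 0).

End FreeInterface.

(* Main.v *)
Require Import Defs.
From HB Require Import structures.
From mathcomp Require Import all_boot all_order all_algebra.
From mathcomp Require Import all_classical all_reals all_analysis.
From mathcomp Require Import ring lra.
From mathcomp Require Import measurable_realfun.
Import Order.TTheory GRing.Theory Num.Theory.
Import numFieldNormedType.Exports.
Local Open Scope classical_set_scope.
Local Open Scope ring_scope.
Lemma nm_le_integral d (T : measurableType d) (R : realType)
  (mu : {measure set T -> \bar R}) (D : set T) (f g : T -> \bar R) :
  (forall x, D x -> (0 <= f x)%E) -> (forall x, D x -> (f x <= g x)%E) ->
  (\int[mu]_(x in D) f x <= \int[mu]_(x in D) g x)%E.
Proof.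
move=> f0 fg.
have g0 : forall x, D x -> (0 <= g x)%E by move=> x Dx; exact: le_trans (f0 _ Dx) (fg _ Dx).
rewrite (ge0_integralE mu f0) (ge0_integralE mu g0) /=.
apply: le_ereal_sup => _ [h hf <-]; exists h => //= x.
apply: le_trans (hf x) _; rewrite /patch; case: ifP => // /[!inE] Dx; exact: fg.
Qed.

Lemma abse_sub_le (R : realType) (a b G : \bar R) :
  (0 <= a)%E -> (a <= G)%E -> (0 <= b)%E -> (b <= G)%E -> (`|a - b| <= G)%E.
Proof.
case: G => [G| |] ; last first.
- move=> a0 aG; have := le_trans a0 aG; by rewrite leeNy_eq.
- by move=> *; rewrite leey.
case: a => [a| |] //; case: b => [b| |] //.
rewrite !lee_fin => a0 aG b0 bG /=.
rewrite ler_norml; apply/andP; split; lra.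
Qed.

Lemma nm_abs_integral d (T : measurableType d) (R : realType)
  (mu : {measure set T -> \bar R}) (D : set T) (f g : T -> R) :
  (forall x, D x -> `|f x| <= g x) ->
  (`|\int[mu]_(x in D) (f x)%:E| <= \int[mu]_(x in D) (g x)%:E)%E.
Proof.
move=> fg; rewrite integralE; apply: abse_sub_le.
- by apply: integral_ge0 => x _; exact: funepos_ge0.
- apply: nm_le_integral => x Dx; first exact: funepos_ge0.
  rewrite funeposE -EFin_max lee_fin ge_max; apply/andP; split.
    exact: le_trans (ler_norm _) (fg _ Dx).
  exact: le_trans (normr_ge0 _) (fg _ Dx).
- by apply: integral_ge0 => x _; exact: funeneg_ge0.
- apply: nm_le_integral => x Dx; first exact: funeneg_ge0.
  rewrite funenegE -EFinN -EFin_max lee_fin ge_max; apply/andP; split.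
    apply: le_trans (fg _ Dx); rewrite -normrN; exact: ler_norm.
  exact: le_trans (normr_ge0 _) (fg _ Dx).
Qed.
Section S.
Variable R : realType.
Variables (t c K : R).
Hypotheses (t0 : 0 < t) (c0 : 0 < c) (K0 : 0 <= K).

Let Phi (tau : R) := K / Num.sqrt (t - tau) * expR (- c * (t - tau)).
Let F (r : R) := t - r ^+ 2 / c.

Lemma dF (r : R) : is_derive r 1 F (- (r *+ 2 / c)).
Proof.
rewrite /F. apply: is_derive_eq.
rewrite add0r mul1r scaler0 add0r -mulr2n.
by rewrite -[c^-1 *: _]/(c^-1 * _) -[r%:A]/(r * 1) mulr1 mulrC.
Qed.

Lemma cPhi tau : tau < t -> {for tau, continuous Phi}.
Proof.
move=> tt; rewrite /Phi.
apply: cvgM; last first.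
  apply: continuous_comp; last exact: continuous_expR.
  apply: cvgM; first exact: cvg_cst.
  by apply: cvgB; [exact: cvg_cst | exact: cvg_id].
apply: cvgM; first exact: cvg_cst.
apply: cvgV; first by rewrite sqrtr_eq0 -ltNge subr_gt0.
apply: continuous_comp; last exact: sqrt_continuous.
by apply: cvgB; [exact: cvg_cst | exact: cvg_id].
Qed.

Lemma cF (r : R) : {for r, continuous F}.
Proof.
apply: cvgB; first exact: cvg_cst.
apply: cvgM; last exact: cvg_cst.
exact: exprn_continuous.
Qed.

Lemma F'E : F^`()%classic = fun r => - (r *+ 2 / c).
Proof. apply/funext => r; rewrite derive1E; by case: (dF r). Qed.

Lemma cF' (r : R) : {for r, continuous F^`()%classic}.
Proof.
rewrite F'E; apply: cvgN; apply: cvgM; last exact: cvg_cst.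
exact: cvgMn.
Qed.

Lemma alg_eq (r sc E : R) : 0 < r -> 0 < sc ->
  K / (r / sc) * E * - - (r *+ 2 / sc ^+ 2) = 2 * K / sc * E.
Proof.
move=> r0 sc0; rewrite opprK mulr2n; field.
by apply/andP; split; apply/lt0r_neq0.
Qed.

Lemma eps_bound (e : R) : 0 < e -> e <= t - e ->
  (\int[lebesgue_measure]_(tau in `[e, (t - e)%R]) (Phi tau)%:E
     <= (K * Num.sqrt pi / Num.sqrt c)%:E)%E.
Proof.
move=> e0 ete.
set a := Num.sqrt (c * e); set b := Num.sqrt (c * (t - e)).
have a0 : 0 < a by rewrite sqrtr_gt0 mulr_gt0.
have ab : a <= b.
  rewrite /a /b ler_sqrt; last by rewrite mulr_ge0 // ?ltW //; lra.
  by rewrite ler_pM2l //.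
have Fa : F a = t - e.
  rewrite /F /a sqr_sqrtr; last by rewrite mulr_ge0 // ltW.
  by field; apply/lt0r_neq0.
have Fb : F b = e.
  rewrite /F /b sqr_sqrtr; last by rewrite mulr_ge0 // ?ltW //; lra.
  by field; apply/lt0r_neq0.
have := @integration_by_substitution_decreasing R F Phi a b ab.
rewrite Fa Fb => ->; first last.
- apply: continuous_in_subspaceT => x /[!inE] /= /[!in_itv] /= /andP[_ xt].
  apply: cPhi; lra.
- split.
  + by move=> x _; case: (dF x).
  + exact: cvg_at_right_filter (cF a).
  + exact: cvg_at_left_filter (cF b).
- by apply/cvg_ex; exists (F^`()%classic b); exact: cvg_at_left_filter (cF' b).
- by apply/cvg_ex; exists (F^`()%classic a); exact: cvg_at_right_filter (cF' a).
- by move=> x _; exact: cF'.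
- move=> x y /[!in_itv] /= /andP[ax _] /andP[ay _] xy.
  rewrite /F ltrD2l ltrN2 ltr_pM2r ?invr_gt0 // !expr2.
  have x0 : 0 < x by lra.
  nra.
rewrite F'E.
have sc0 : 0 < Num.sqrt c by rewrite sqrtr_gt0.
apply: (@le_trans _ _ (\int[lebesgue_measure]_(r in `[a, b]) ((2 * K / Num.sqrt c)%:E * (gauss_fun r)%:E))%E).
  rewrite le_eqVlt; apply/orP; left; apply/eqP; apply: eq_integral.
  move=> r /[!inE] /= /[!in_itv] /= /andP[ar _].
  rewrite -EFinM; congr EFin.
  have r0 : 0 < r by lra.
  rewrite /Phi /F /gauss_fun !fctE /=.
  have -> : t - (t - r^+2/c) = r^+2/c by ring.
  rewrite sqrtrM ?sqr_ge0 // sqrtr_sqr ger0_norm ?ltW // sqrtrV ?ltW //.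
  have -> : - c * (r^+2/c) = - r^+2 by field; apply/lt0r_neq0.
  by have := @alg_eq r (Num.sqrt c) (expR (- r ^+ 2)) r0 sc0; rewrite sqr_sqrtr // ltW.
have k0 : 0 <= 2 * K / Num.sqrt c by rewrite divr_ge0 ?mulr_ge0 // ltW.
have H : (\int[lebesgue_measure]_(x in `[a, b]) (gauss_fun x)%:E <=
    \int[lebesgue_measure]_(x in `[0%R, +oo[) (gauss_fun x)%:E)%E.
  apply: ge0_subset_integral => //.
  - apply/measurable_EFinP; exact: measurable_funTS measurable_gauss_fun.
  - by move=> x _; rewrite lee_fin gauss_fun_ge0.
  - move=> x /=; rewrite !in_itv /= andbT => /andP[ax _]; lra.
rewrite integral0y_gauss in H.
rewrite ge0_integralZl_EFin //; first last.
- apply/measurable_EFinP; exact: measurable_funTS measurable_gauss_fun.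
- by move=> x _; rewrite lee_fin gauss_fun_ge0.
apply: le_trans (lee_wpmul2l _ H) _; first by rewrite lee_fin.
rewrite -EFinM lee_fin le_eqVlt; apply/orP; left; apply/eqP.
by field; apply/lt0r_neq0.
Qed.

Lemma mPhi : measurable_fun `]0, t[ Phi.
Proof.
apply: open_continuous_measurable_fun; first exact: interval_open.
move=> x; rewrite inE /= in_itv /= => /andP[_ xt]; exact: cPhi.
Qed.

Lemma sing_bound (g : R -> R) : (forall tau, 0 < tau < t -> g tau = Phi tau) ->
  (\int[lebesgue_measure]_(tau in `[0%R, t]) (g tau)%:E
     <= (K * Num.sqrt pi / Num.sqrt c)%:E)%E.
Proof.
move=> gP.
have mgR : measurable_fun `]0, t[ g.
  apply: (eq_measurable_fun Phi) mPhi => x; rewrite inE /= in_itv /= => xt.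
  by rewrite gP.
have mg : measurable_fun `]0, t[ (fun x => (g x)%:E).
  exact/measurable_EFinP.
rewrite integral_itv_bndoo //.
have -> : (\int[lebesgue_measure]_(x in `]0%R, t[) (g x)%:E =
    \int[lebesgue_measure]_(x in `]0%R, t[) (Phi x)%:E)%E.
  by apply: eq_integral => x /[!inE] /= /[!in_itv] /= xt; rewrite gP.
pose e (i : nat) := t / (i.+2)%:R.
have e0 i : 0 < e i by rewrite /e divr_gt0 // ltr0n.
have ete i : e i <= t - e i.
  have : 2 * e i <= t.
    have hN : 2 <= (i.+2)%:R :> R by rewrite ler_nat.
    by rewrite /e mulrA ler_pdivrMr ?ltr0n // [2 * t]mulrC ler_pM2l.
  lra.
pose Fi (i : nat) := `[e i, t - e i]%classic.
have UF : `]0, t[%classic = \bigcup_i Fi i.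
  apply/seteqP; split => x /=.
    rewrite in_itv /= => /andP[x0 xt].
    pose m := Num.min x (t - x).
    have m0 : 0 < m by rewrite lt_min x0 subr_gt0.
    exists (Num.trunc (t / m)) => //=.
    have h := truncnS_gt (t / m).
    have lt : e (Num.trunc (t / m)) < m.
      rewrite /e ltr_pdivrMr ?ltr0n // mulrC -ltr_pdivrMr //.
      apply: lt_trans h _; rewrite ltr_nat; done.
    have : m <= x by rewrite ge_min lexx.
    have : m <= t - x by rewrite ge_min lexx orbT.
    rewrite /Fi /= in_itv /= => h1 h2; apply/andP; split; lra.
  move=> [i _]; rewrite /Fi /= !in_itv /= => /andP[h1 h2].
  have := e0 i; move=> h3; apply/andP; split; lra.
rewrite UF.
have mF i : measurable (Fi i) by rewrite /Fi; exact: measurable_itv.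
have nd : {homo Fi : n m / (n <= m)%N >-> (n <= m)%O}.
  move=> n m nm; rewrite subsetEset /Fi => x /=; rewrite !in_itv /= => /andP[h1 h2].
  have : e m <= e n.
    rewrite /e ler_pM2l // lef_pV2 ?posrE ?ltr0n // ler_nat !ltnS; exact: nm.
  move=> h; apply/andP; split; lra.
have mFi i : measurable_fun (Fi i) (fun x => (Phi x)%:E).
  apply/measurable_EFinP; apply: measurable_funS mPhi => //.
  move=> x; rewrite /Fi /= !in_itv /= => /andP[h1 h2].
  have := e0 i; move=> h3; apply/andP; split; lra.
have Phi0 x : (0 <= (Phi x)%:E)%E.
  by rewrite lee_fin /Phi mulr_ge0 ?expR_ge0 // divr_ge0 // sqrtr_ge0.
have H := ge0_nondecreasing_set_cvg_integral (mu := lebesgue_measure) nd mF mFi (fun _ x _ => Phi0 x).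
rewrite -(cvg_lim _ H) //.
apply: lime_le; first by apply/cvg_ex; eexists; exact: H.
by apply: nearW => i; exact: eps_bound.
Qed.
End S.

Lemma key_ineq (R : realType) (a V0 sg y z : R) : 0 <= a -> 0 < sg ->
  `|z - y| <= V0 * sg ->
  a * `|z| <= y ^+ 2 / (4 * sg) + a * V0 * sg + a ^+ 2 * sg.
Proof.
move=> a0 s0 h.
have hz : `|z| <= `|y| + V0 * sg.
  have := ler_normD (z - y) y; rewrite subrK => h1; lra.
have hw : y ^+ 2 = `|y| ^+ 2 by rewrite real_normK // num_real.
set w := `|y| in hz hw.
have w0 : 0 <= w by exact: normr_ge0.
set q := y ^+ 2 / (4 * sg).
have hq : q * (4 * sg) = w ^+ 2.
  by rewrite /q -hw; field; apply/lt0r_neq0; lra.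
have : 0 <= (w - 2 * a * sg) ^+ 2 by exact: sqr_ge0.
have : a * `|z| <= a * w + a * (V0 * sg) by rewrite -mulrDr ler_wpM2l.
move=> h2 h3.
nra.
Qed.

Lemma mvt_bound (R : realType) (s v : R -> R) (V0 v0 tau t : R) :
  {within [set t | 0 <= t], continuous s} ->
  (forall t, 0 < t -> derivable s t 1 /\ derive1 s t = v t) ->
  (forall t, 0 < t -> - V0 <= v t <= - v0) ->
  0 <= v0 -> 0 < tau -> tau < t -> `|s tau - s t| <= V0 * (t - tau).
Proof.
move=> sc sd vb v00 tau0 taut.
have hd : forall x, x \in `]tau, t[ -> is_derive x 1 s (v x).
  move=> x; rewrite in_itv /= => /andP[h1 _].
  have [dx ex] := sd x (lt_trans tau0 h1).
  by apply: DeriveDef => //; rewrite -derive1E.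
have hc : {within `[tau, t], continuous s}.
  apply: continuous_subspaceW sc => y /=; rewrite in_itv /= => /andP[h1 _]; lra.
have [c1 /[!in_itv] /= /andP[c1a c1b] hc1] := MVT taut hd hc.
have := vb c1 (lt_trans tau0 c1a) => /andP[h1 h2].
rewrite -normrN opprB hc1 normrM [`|t - tau|]ger0_norm; last by lra.
rewrite ler_pM2r ?subr_gt0 // ler_norml; apply/andP; split; lra.
Qed.

Lemma sqrt4 (R : realType) (sg : R) : 0 <= sg ->
  Num.sqrt (4 * pi * sg) = 2 * Num.sqrt pi * Num.sqrt sg.
Proof.
move=> sg0.
have h : 4 * pi * sg = (2 * Num.sqrt pi * Num.sqrt sg) ^+ 2.
  by rewrite !exprMn !sqr_sqrtr ?pi_ge0 //; ring.
by rewrite h sqrtr_sqr ger0_norm // !mulr_ge0 // sqrtr_ge0.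
Qed.

Lemma ptwise (R : realType) (gamma alpha V0 c x t tau st stau vt : R) :
  0 <= alpha -> 0 <= V0 -> tau < t ->
  `|(x - st) - (x - stau)| <= V0 * (t - tau) ->
  `|vt| <= V0 ->
  c = gamma - alpha * V0 - alpha ^+ 2 ->
  `| - (expR (- gamma * (t - tau)) * heatG x t stau tau * vt) | <=
    (V0 / (2 * Num.sqrt pi) * expR (- (alpha * `|x - st|))) / Num.sqrt (t - tau)
      * expR (- c * (t - tau)).
Proof.
move=> a0 V00 taut hz hv hc.
set sg := t - tau.
have sg0 : 0 < sg by rewrite /sg subr_gt0.
set y := x - stau; set z := x - st.
have key := @key_ineq R alpha V0 sg y z a0 sg0 hz.
rewrite /heatG -/sg -/y sqrt4; last exact: ltW.
set P := (2 * Num.sqrt pi * Num.sqrt sg)^-1.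
have P0 : 0 <= P by rewrite /P invr_ge0 !mulr_ge0 // sqrtr_ge0.
have hexp : expR (- gamma * sg) * expR (- y ^+ 2 / (4 * sg)) <=
    expR (- (alpha * `|z|)) * expR (- c * sg).
  rewrite -!expRD ler_expR mulNr.
  have -> : - c * sg = - gamma * sg + alpha * V0 * sg + alpha ^+ 2 * sg by rewrite hc; ring.
  lra.
have sp0 : 0 < Num.sqrt (pi : R) by rewrite sqrtr_gt0 pi_gt0.
have ss0 : 0 < Num.sqrt sg by rewrite sqrtr_gt0.
have -> : V0 / (2 * Num.sqrt pi) * expR (- (alpha * `|z|)) / Num.sqrt sg * expR (- c * sg)
    = P * ((expR (- (alpha * `|z|)) * expR (- c * sg)) * V0).
  by rewrite /P; field; apply/andP; split; apply/lt0r_neq0.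
rewrite normrN !normrM (ger0_norm (expR_ge0 _)) (ger0_norm P0) (ger0_norm (expR_ge0 _)).
have -> : expR (- gamma * sg) * (P * expR (- y ^+ 2 / (4 * sg))) * `|vt| =
   P * ((expR (- gamma * sg) * expR (- y ^+ 2 / (4 * sg))) * `|vt|) by ring.
apply: ler_wpM2l; first exact: P0.
apply: ler_pM => //.
Qed.

Theorem mainTheorem4 (R : realType) (gamma v0 V0 C alpha : R)
    (g u0 s v : R -> R) (u : R -> R -> R) :
  0 < gamma -> 0 < v0 -> v0 <= V0 ->
  kinetics v0 V0 C g ->
  0 <= alpha -> alpha < Num.min (v0 / 4) (gamma / (2 * V0)) ->
  in_C_alpha alpha u0 ->
  free_interface_solution gamma g u0 s v u ->
  (forall t, 0 < t -> - V0 <= v t <= - v0) ->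
  forall t, 0 < t -> forall x,
    ((expR (alpha * `|x - s t|))%:E * `| T1 gamma s v x t | <= (V0 / Num.sqrt gamma)%:E)%E.
Proof.
move=> g0 v00 v0V0 _ a0 amin _ sol vb t t0 x.
have [av0 aG] : alpha < v0 / 4 /\ alpha < gamma / (2 * V0).
  by move: amin; rewrite lt_min => /andP[].
have V00 : 0 < V0 by lra.
case: sol => _ [scont [sder _]].
have aV : alpha * (2 * V0) < gamma by rewrite -ltr_pdivlMr // mulr_gt0.
have a2 : alpha ^+ 2 <= alpha * V0 / 4.
  rewrite expr2; have : alpha <= V0 / 4 by lra.
  move=> h; rewrite -mulrA; apply: ler_wpM2l => //; lra.
set c := gamma - alpha * V0 - alpha ^+ 2.
have c0 : 0 < c by rewrite /c; lra.
have c4 : gamma <= 4 * c by rewrite /c; lra.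
set z := x - s t.
set K := V0 / (2 * Num.sqrt pi) * expR (- (alpha * `|z|)).
have sp0 : 0 < Num.sqrt (pi : R) by rewrite sqrtr_gt0 pi_gt0.
have K0 : 0 <= K by rewrite /K mulr_ge0 ?expR_ge0 // divr_ge0 ?mulr_ge0 // ltW.
set I := fun tau => - (expR (- gamma * (t - tau)) * heatG x t (s tau) tau * v tau).
set gg := fun tau => if tau == 0 then `|I 0| else K / Num.sqrt (t - tau) * expR (- c * (t - tau)).
have Hint : (`|T1 gamma s v x t| <= (K * Num.sqrt pi / Num.sqrt c)%:E)%E.
  apply: le_trans (@sing_bound R t c K t0 c0 K0 gg _); last first.
    by move=> tau /andP[h _]; rewrite /gg gt_eqF.
  rewrite /T1 /time_interval; apply: nm_abs_integral => tau /=.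
  rewrite in_itv /= => /andP[tau0 taut].
  rewrite /gg; case: eqP => [->|tn0]; first by [].
  have tau0' : 0 < tau by rewrite lt_neqAle eq_sym tau0 andbT; apply/eqP.
  have [->|tnt] := eqVneq tau t.
    by rewrite /I /heatG subrr !mulr0 sqrtr0 invr0 !mul0r mulr0 mul0r oppr0 normr0 mulr0 mul0r.
  have taut' : tau < t by rewrite lt_neqAle tnt taut.
  apply: (@ptwise R gamma alpha V0 c x t tau (s t) (s tau) (v tau)) => //.
  - exact: ltW.
  - have -> : x - s t - (x - s tau) = s tau - s t by ring.
    exact: (@mvt_bound R s v V0 v0 tau t scont sder vb (ltW v00) tau0' taut').
  - have := vb tau tau0' => /andP[h1 h2]; rewrite ler_norml; apply/andP; split; lra.
apply: le_trans (lee_wpmul2l _ Hint) _; first by rewrite lee_fin expR_ge0.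
rewrite -EFinM lee_fin.
have sc0 : 0 < Num.sqrt c by rewrite sqrtr_gt0.
have -> : expR (alpha * `|z|) * (K * Num.sqrt pi / Num.sqrt c) = V0 / (2 * Num.sqrt c).
  rewrite /K expRN; field.
  by rewrite !lt0r_neq0 ?expR_gt0.
have sg0 : 0 < Num.sqrt gamma by rewrite sqrtr_gt0.
have hs : Num.sqrt gamma <= 2 * Num.sqrt c.
  have h1 := sqr_sqrtr (ltW g0); have h2 := sqr_sqrtr (ltW c0).
  rewrite expr2 in h1 h2; nra.
rewrite ler_pM2l // lef_pV2 ?posrE //; lra.
Qed.
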